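(* Let $G$ be an abelian group and let $Z$ be a finite multiset of elements of $G$ with $\dim(Z)\geqslant1$. Then $$|\Sigma(Z)|\leqslant 2^{2\dim(Z)\left(\log_2\left(\frac{|Z|}{\dim(Z)}\right)+2\right)}=\left(\frac{4|Z|}{\dim(Z)}\right)^{2\dim(Z)}.$$
   Context: $|Z|$ is the size of $Z$ counted with multiplicity. The additive span of $Z$ is $\Sigma(Z)=\{\sum_{z\in Z'}z: Z'\subseteq Z\}$, where $Z'$ ranges over sub-multisets of $Z$. A (multi)set $S$ is dissociated if any two sub-multisets of $S$ with equal sums are equal. $\dim(Z)$ is the size of the largest dissociated sub-multiset of $Z$. *)

(* Defs.v *)
From mathcomp Require Import all_boot all_order all_algebra.
Set Implicit Arguments. Unset Strict Implicit. Unset Printing Implicit Defensive.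
Import Order.TTheory GRing.Theory Num.Theory.
Local Open Scope ring_scope.

(* A finite multiset of elements of an abelian group G (zmodType) is
   represented by a sequence Z : seq G (order irrelevant). Sub-multisets of Z
   are exactly the subsequences mask m Z, m a bit mask of length size Z;
   two sub-multisets are equal as multisets iff they are permutations of
   each other (perm_eq). *)

Definition ssum (G : zmodType) (s : seq G) : G := \sum_(x <- s) x.

Definition addspan (G : zmodType) (Z : seq G) : seq G :=
  undup [seq ssum (mask (val m) Z) | m : (size Z).-tuple bool].

Definition dissociated (G : zmodType) (S : seq G) : bool :=
  [forall m1 : (size S).-tuple bool, forall m2 : (size S).-tuple bool,
    (ssum (mask (val m1) S) == ssum (mask (val m2) S)) ==>
    perm_eq (mask (val m1) S) (mask (val m2) S)].

Definition dimZ (G : zmodType) (Z : seq G) : nat :=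
  \max_(m : (size Z).-tuple bool | dissociated (mask (val m) Z))
     size (mask (val m) Z).

(* Main.v *)
Require Import Defs.
From mathcomp Require Import all_boot all_order all_algebra.
Import Order.TTheory GRing.Theory Num.Theory.
Local Open Scope ring_scope.
Local Close Scope ring_scope.
Set Implicit Arguments. Unset Strict Implicit. Unset Printing Implicit Defensive.

Section Pajor.
Variable T : finType.
Implicit Types (F : {set {set T}}) (A B S U : {set T}).

Definition shatters F A := [forall B : {set T}, (B \subset A) ==> [exists S in F, S :&: A == B]].
Definition sh F := [set A | shatters F A].

Lemma shP F A : reflect (forall B, B \subset A -> exists2 S, S \in F & S :&: A = B) (A \in sh F).
Proof.
rewrite inE; apply: (iffP forallP) => [H B sBA|H B].
  by have /implyP/(_ sBA)/existsP[S /andP[SF /eqP e]] := H B; exists S.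
apply/implyP => sBA; have [S SF e] := H B sBA; apply/existsP; exists S; by rewrite SF e eqxx.
Qed.

Lemma sh_avoid F x A : (forall S, S \in F -> x \notin S) -> A \in sh F -> x \notin A.
Proof.
move=> HF /shP/(_ A (subxx A))[S SF e]; apply/negP => xA.
have : x \in S :&: A by rewrite e.
by rewrite inE (negbTE (HF S SF)).
Qed.

Lemma pajor0 F : F \subset powerset set0 -> #|F| <= #|sh F|.
Proof.
move=> sF; case: (boolP (set0 \in F)) => [F0|nF0].
  have -> : F = [set set0].
    apply/setP=> S; rewrite inE; apply/idP/eqP => [SF|->//].
    by have := subsetP sF S SF; rewrite powersetE subset0 => /eqP.
  rewrite cards1 card_gt0; apply/set0Pn; exists set0; apply/shP => B.
  rewrite subset0 => /eqP ->; exists set0; rewrite ?inE ?set0I //.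
have -> : F = set0.
  apply/setP=> S; rewrite inE; apply/negP => SF.
  have := subsetP sF S SF; rewrite powersetE subset0 => /eqP e.
  by rewrite -e SF in nF0.
by rewrite cards0.
Qed.

Lemma pajor k U F : #|U| <= k -> F \subset powerset U -> #|F| <= #|sh F|.
Proof.
elim: k U F => [|k IH] U F.
  by rewrite leqn0 cards_eq0 => /eqP ->; apply: pajor0.
move=> cU sF.
case: (set_0Vmem U) => [U0|[x xU]]; first by subst U; apply: pajor0.
set U' := U :\ x.
have cU' : #|U'| <= k by rewrite -ltnS (leq_trans _ cU) // [#|U|](cardsD1 x) xU.
set Fx := [set S in F | x \in S].
set F0 := F :\: Fx.
set F1 := [set S :\ x | S in Fx].
have cF : #|F| = #|F0| + #|F1|.
  rewrite card_in_imset; last first.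
    move=> S1 S2; rewrite !inE => /andP[_ h1] /andP[_ h2] e.
    by rewrite -(setD1K h1) e setD1K.
  rewrite -(cardsID Fx F) addnC.
  have -> : F :&: Fx = Fx by apply/setIidPr; apply/subsetP=> S; rewrite inE => /andP[].
  by [].
have avF0 : forall S, S \in F0 -> x \notin S.
  move=> S; rewrite !inE => /andP[h SF]; apply/negP => xS; by rewrite SF xS in h.
have avF1 : forall S, S \in F1 -> x \notin S.
  by move=> S /imsetP[S' _ ->]; rewrite !inE eqxx.
have avU : forall S, S \in F0 :|: F1 -> x \notin S.
  by move=> S; rewrite inE => /orP[/avF0|/avF1].
have avI : forall S, S \in F0 :&: F1 -> x \notin S.
  by move=> S; rewrite inE => /andP[/avF0].
have subU : forall S, S \in F0 :|: F1 -> S \subset U'.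
  move=> S SF; apply/subsetP => y yS; rewrite !inE.
  have xS := avU S SF.
  case: (eqVneq y x) => [eyx|_] /=; first by rewrite -eyx yS in xS.
  move: SF; rewrite inE => /orP[|/imsetP[S' S'F eS]].
    by rewrite !inE => /andP[_ SF]; have := subsetP sF S SF; rewrite powersetE => /subsetP; apply.
  move: S'F; rewrite inE => /andP[S'F _]; have := subsetP sF S' S'F; rewrite powersetE => /subsetP; apply.
  by move: yS; rewrite eS inE => /andP[].
have IH1 : #|F0 :|: F1| <= #|sh (F0 :|: F1)|.
  apply: (IH U') => //; apply/subsetP => S SF; rewrite powersetE; exact: subU.
have IH2 : #|F0 :&: F1| <= #|sh (F0 :&: F1)|.
  apply: (IH U') => //; apply/subsetP => S SF; rewrite powersetE; apply: subU.
  by move: SF; rewrite !inE => /andP[-> _].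
have sh1 : sh (F0 :|: F1) \subset sh F.
  apply/subsetP => A /[dup] AS /shP HA; have xA := sh_avoid avU AS.
  apply/shP => B sBA; have [S SF eS] := HA B sBA.
  move: SF; rewrite inE => /orP[|/imsetP[S' S'F eS']].
    by rewrite !inE => /andP[_ SF]; exists S.
  move: S'F; rewrite inE => /andP[S'F _]; exists S' => //.
  rewrite -eS eS'; apply/setP => y; rewrite !inE.
  by case: (eqVneq y x) => [->|]; rewrite ?(negbTE xA) ?andbF.
have sh2 : [set x |: A | A in sh (F0 :&: F1)] \subset sh F.
  apply/subsetP => _ /imsetP[A /[dup] AS /shP HA ->]; have xA := sh_avoid avI AS.
  apply/shP => B sBA.
  have sB'A : B :\ x \subset A.
    apply/subsetP => y; rewrite !inE => /andP[nyx yB].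
    by have := subsetP sBA y yB; rewrite !inE (negbTE nyx).
  have [S SF eS] := HA _ sB'A.
  have xS := avI S SF.
  move: SF; rewrite inE => /andP[SF0 /imsetP[S' S'F eS']].
  move: S'F; rewrite inE => /andP[S'F xS'].
  move: SF0; rewrite !inE => /andP[_ SF].
  case: (boolP (x \in B)) => xB.
    exists S' => //; apply/setP => y; move/setP: eS => /(_ y); rewrite eS' !inE.
    by case: (eqVneq y x) => [->|]; rewrite ?xS' ?xB //= => _ ->.
  exists S => //; apply/setP => y; move/setP: eS => /(_ y); rewrite !inE.
  by case: (eqVneq y x) => [->|] /=; rewrite ?(negbTE xS) ?(negbTE xB) //= => ->.
have dis : [disjoint sh (F0 :|: F1) & [set x |: A | A in sh (F0 :&: F1)]].
  rewrite disjoints_subset; apply/subsetP => A AS; rewrite inE; apply/negP => /imsetP[A' _ eA].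
  by have := sh_avoid avU AS; rewrite eA !inE eqxx.
have ci : #|[set x |: A | A in sh (F0 :&: F1)]| = #|sh (F0 :&: F1)|.
  apply: card_in_imset => A1 A2 h1 h2 e.
  have x1 := sh_avoid avI h1; have x2 := sh_avoid avI h2.
  by rewrite -(setU1K x1) e setU1K.
rewrite cF -cardsUI.
apply: (leq_trans (leq_add IH1 IH2)).
have e0 : #|sh (F0 :|: F1) :&: [set x |: A | A in sh (F0 :&: F1)]| = 0 by rewrite (disjoint_setI0 dis) cards0.
rewrite -ci -[X in X <= _]subn0 -e0 -cardsU.
by apply: subset_leq_card; rewrite subUset sh1 sh2.
Qed.
End Pajor.

Lemma card_small (T : finType) d :
  #|[set A : {set T} | #|A| <= d]| <= \sum_(k < d.+1) 'C(#|T|, k).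
Proof.
elim: d => [|d IH].
  rewrite big_ord1 -card_draws subset_leq_card //.
  by apply/subsetP => A; rewrite !inE leqn0.
rewrite big_ord_recr /= -card_draws.
apply: leq_trans (leq_add IH (leqnn _)).
apply: leq_trans (leq_card_setU _ _).1.
apply: subset_leq_card; apply/subsetP => A; rewrite !inE leq_eqVlt ltnS.
by case/orP => ->; rewrite ?orbT.
Qed.


Lemma ffact_leq_exp n k : n ^_ k <= n ^ k.
Proof.
elim: k => [|k IH]; first by rewrite ffactn0.
by rewrite ffactnSr expnSr leq_mul // leq_subr.
Qed.

Lemma exp_leq_ffact d k : k <= d -> d ^ k <= (2 * d) ^_ k.
Proof.
elim: k => [|k IH] lekd; first by rewrite ffactn0.
rewrite ffactnSr expnSr leq_mul ?IH ?(ltnW lekd) //.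
by rewrite mul2n -addnn -addnBA ?leq_addr // ltnW.
Qed.

Lemma expbase e m n : m <= n -> m ^ e <= n ^ e.
Proof. by move=> mn; elim: e => [|e IH] //; rewrite !expnS leq_mul. Qed.

Lemma term_bound n d k : k <= d -> d <= n -> 'C(n, k) * d ^ (2 * d) <= n ^ (2 * d) * 'C(2 * d, k).
Proof.
move=> kd dn.
have h1 : 'C(n, k) * d ^ k <= n ^ k * 'C(2 * d, k).
  rewrite -(leq_pmul2r (fact_gt0 k)) mulnAC bin_ffact -mulnA bin_ffact.
  by apply: leq_mul; [apply: ffact_leq_exp | apply: exp_leq_ffact].
have k2d : k <= 2 * d by rewrite mul2n -addnn (leq_trans kd) ?leq_addr.
rewrite -(subnKC k2d) !expnD mulnA.
apply: leq_trans (leq_mul h1 (expbase (2 * d - k) dn)) _.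
by rewrite mulnAC subnKC.
Qed.

Lemma sum_bound n d : d <= n -> (\sum_(k < d.+1) 'C(n, k)) * d ^ (2 * d) <= (4 * n) ^ (2 * d).
Proof.
move=> dn; rewrite big_distrl /=.
have h : \sum_(k < d.+1) 'C(n, k) * d ^ (2 * d) <= \sum_(k < d.+1) n ^ (2 * d) * 'C(2 * d, k).
  by apply: leq_sum => k _; apply: term_bound => //; rewrite -ltnS.
apply: leq_trans h _.
rewrite -big_distrr /= expnMn mulnC.
apply: leq_mul => //.
have -> : 4 ^ (2 * d) = 2 ^ (2 * d) * 2 ^ (2 * d) by rewrite -expnMn.
apply: leq_trans (leq_pmulr _ (expn_gt0 2 _)).
have -> : 2 ^ (2 * d) = (1 + 1) ^ (2 * d) by [].
rewrite expnDn.
have d2 : d.+1 <= (2 * d).+1 by rewrite ltnS mul2n -addnn leq_addr.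
rewrite (big_ord_widen _ (fun k => 'C(2 * d, k)) d2).
rewrite big_mkcond /=; apply: leq_sum => k _.
by case: ifP => _; rewrite ?exp1n ?muln1.
Qed.

Section Main.
Variables (G : zmodType) (Z : seq G).
Local Notation n := (size Z).
Local Open Scope ring_scope.

Definition zz (i : 'I_n) : G := nth 0 Z i.
Definition sumz (S : {set 'I_n}) : G := \sum_(i in S) zz i.
Definition rk (S : {set 'I_n}) : nat := (\sum_(i in S) 2 ^ (val i))%N.

Lemma Zmap : map zz (enum 'I_n) = Z.
Proof. by rewrite (map_comp (nth 0 Z) val) val_enum_ord -/(mkseq _ _) mkseq_nth. Qed.

Lemma ssum_map (t : seq 'I_n) : uniq t -> ssum (map zz t) = sumz [set x in t].
Proof. by move=> ut; rewrite /ssum big_map big_uniq //; apply: eq_bigl => i; rewrite inE. Qed.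

Lemma mask_Z m : mask m Z = map zz (mask m (enum 'I_n)).
Proof. by rewrite map_mask Zmap. Qed.

Lemma ssum_mask m : ssum (mask m Z) = sumz [set x in mask m (enum 'I_n)].
Proof. by rewrite mask_Z ssum_map // mask_uniq // enum_uniq. Qed.

Definition minrep (S : {set 'I_n}) :=
  [forall S' : {set 'I_n}, (sumz S' == sumz S) ==> (rk S <= rk S')%N].

Definition fpick (s : G) : {set 'I_n} :=
  odflt set0 [pick S | (sumz S == s) && minrep S].

Lemma fpickP s : s \in addspan Z -> sumz (fpick s) = s /\ minrep (fpick s).
Proof.
rewrite mem_undup => /mapP[m _ ->].
set S0 := [set x in mask m (enum 'I_n)].
have P0 : sumz S0 == ssum (mask m Z) by rewrite ssum_mask.
case: (@arg_minnP _ S0 (fun S => sumz S == ssum (mask m Z)) rk P0) => S1 /eqP e1 min1.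
rewrite /fpick; case: pickP => [S /andP[/eqP -> mS] | none] //=.
have := none S1; rewrite e1 eqxx /=.
have -> // : minrep S1.
by apply/forallP => S'; apply/implyP => /eqP e'; apply: min1; rewrite e' e1.
Qed.

Definition FF : {set {set 'I_n}} := [set S in map fpick (addspan Z)].

Lemma card_FF : size (addspan Z) = #|FF|.
Proof.
rewrite cardsE.
have uL : uniq (map fpick (addspan Z)).
  rewrite map_inj_in_uniq ?undup_uniq // => s1 s2 h1 h2 e.
  by rewrite -(fpickP h1).1 -(fpickP h2).1 e.
by rewrite (card_uniqP uL) size_map.
Qed.

Lemma FF_min S : S \in FF -> minrep S.
Proof. by rewrite inE => /mapP[s hs ->]; exact: (fpickP hs).2. Qed.

Lemma geom j : (\sum_(i < j) 2 ^ i < 2 ^ j)%N.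
Proof.
elim: j => [|j IH]; first by rewrite big_ord0.
by rewrite big_ord_recr /= expnS mul2n -addnn ltn_add2r.
Qed.

Lemma rk_lt (Q : {set 'I_n}) (j : nat) : (j <= n)%N -> (forall i, i \in Q -> i < j)%N -> (rk Q < 2 ^ j)%N.
Proof.
move=> jn hQ; apply: (leq_ltn_trans _ (geom j)).
rewrite (big_ord_widen _ (fun i => 2 ^ i)%N jn) /rk big_mkcond [X in (_ <= X)%N]big_mkcond /=.
apply: leq_sum => i _; case: ifP => // /hQ ->; done.
Qed.

Lemma rk_ge (P : {set 'I_n}) (j : 'I_n) : j \in P -> (2 ^ j <= rk P)%N.
Proof. by move=> jP; rewrite /rk (big_setD1 j jP) leq_addr. Qed.

Lemma core A (P Q : {set 'I_n}) (j : 'I_n) :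
  A \in sh FF -> P \subset A -> Q \subset A -> P :&: Q = set0 ->
  sumz P = sumz Q -> j \in P -> (forall i, i \in Q -> i < j)%N -> False.
Proof.
move=> AS PA QA PQ0 ePQ jP hQ.
have /shP HA := AS.
have [S SF eS] := HA P PA.
have PS : P \subset S by rewrite -eS subsetIl.
have QS : forall x, x \in Q -> x \notin S.
  move=> x xQ; apply/negP => xS.
  have : x \in P :&: Q by rewrite inE -eS inE xS (subsetP QA x xQ) xQ.
  by rewrite PQ0 inE.
set S' := (S :\: P) :|: Q.
have e1 : S' :&: Q = Q by apply/setIidPr; rewrite subsetUr.
have e2 : S' :\: Q = S :\: P.
  apply/setP => x; rewrite !inE; case: (boolP (x \in Q)) => xQ /=; last by rewrite orbF.
  by rewrite (negbTE (QS x xQ)) andbF.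
have e3 : S :&: P = P by apply/setIidPr.
have sum1 : sumz S' = sumz S.
  rewrite /sumz (big_setID (A:=S') Q) e1 e2 [in RHS](big_setID (A:=S) P) e3.
  have -> : \sum_(i in Q) zz i = \sum_(i in P) zz i by exact: esym ePQ.
  by [].
have rk1 : rk S' = (rk Q + rk (S :\: P))%N by rewrite /rk (big_setID (A:=S') Q) e1 e2.
have rk2 : rk S = (rk P + rk (S :\: P))%N by rewrite /rk (big_setID (A:=S) P) e3.
have := FF_min SF => /forallP /(_ S') /implyP; rewrite sum1 eqxx => /(_ isT).
rewrite rk1 rk2 leq_add2r => hle.
have h2 := rk_lt (ltnW (ltn_ord j)) hQ.
have h1 := rk_ge jP.
by have := leq_ltn_trans (leq_trans h1 hle) h2; rewrite ltnn.
Qed.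

Lemma sh_indep A : A \in sh FF ->
  forall P Q : {set 'I_n}, P \subset A -> Q \subset A -> sumz P = sumz Q -> P = Q.
Proof.
move=> AS P Q PA QA ePQ.
set P' := P :\: Q; set Q' := Q :\: P.
case: (boolP (P' :|: Q' == set0)) => [|/set0Pn[i0 hi0]].
  by rewrite setU_eq0 !setD_eq0 => /andP[h1 h2]; apply/eqP; rewrite eqEsubset h1 h2.
exfalso.
have e' : sumz P' = sumz Q'.
  by move: ePQ; rewrite /sumz (big_setID (A:=P) Q) (big_setID (A:=Q) P) setIC => /addrI.
have dis : P' :&: Q' = set0.
  by apply/setP => x; rewrite !inE; case: (x \in P); case: (x \in Q).
have P'A : P' \subset A by apply: subset_trans PA; rewrite subsetDl.
have Q'A : Q' \subset A by apply: subset_trans QA; rewrite subsetDl.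
case: (@arg_maxnP _ i0 (fun i => i \in P' :|: Q') val hi0) => j jin jmax.
have nij : forall i, i \in P' -> forall k, k \in Q' -> i != k.
  move=> i iP k kQ; apply/negP => /eqP eik.
  have : i \in P' :&: Q' by rewrite inE iP eik kQ.
  by rewrite dis inE.
move: jin; rewrite inE => /orP[jP | jQ].
  apply: (core AS P'A Q'A dis e' jP) => i iQ.
  have hij : (i <= j)%N by apply: jmax; rewrite inE iQ orbT.
  rewrite ltn_neqAle hij andbT.
  by rewrite eq_sym; apply: (nij j jP i iQ).
apply: (core AS Q'A P'A _ (esym e') jQ) => [|i iP]; first by rewrite setIC.
have hij : (i <= j)%N by apply: jmax; rewrite inE iP.
rewrite ltn_neqAle hij andbT.
by apply: (nij i iP j jQ).
Qed.

Lemma indep_dim (A : {set 'I_n}) : (forall P Q : {set 'I_n}, P \subset A -> Q \subset A -> sumz P = sumz Q -> P = Q) ->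
  (#|A| <= dimZ Z)%N.
Proof.
move=> hA.
pose m : n.-tuple bool := [tuple (i \in A) | i < n].
set t0 := mask m (enum 'I_n).
have et0 : t0 = [seq i <- enum 'I_n | i \in A] by rewrite filter_mask.
have ut0 : uniq t0 by rewrite mask_uniq ?enum_uniq.
have mt0 : t0 =i A by move=> x; rewrite et0 mem_filter mem_enum andbT.
have sz : size (mask m Z) = #|A|.
  by rewrite mask_Z size_map -(card_uniqP ut0); apply: eq_card.
rewrite -sz /dimZ; apply: leq_bigmax_cond.
have key : forall m1 : seq bool, ssum (mask m1 (mask m Z)) = sumz [set x in mask m1 t0]
    /\ mask m1 (mask m Z) = map zz (mask m1 t0).
  move=> m1; have u1 : uniq (mask m1 t0) by exact: (@mask_uniq _ t0 ut0 m1).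
  by rewrite mask_Z -map_mask ssum_map.
apply/forallP => m1; apply/forallP => m2; apply/implyP.
rewrite (key _).1 (key _).1 (key _).2 (key _).2 => /eqP e.
have s1 : forall m', [set x in mask m' t0] \subset A.
  by move=> m'; apply/subsetP => x; rewrite inE => /mem_mask; rewrite mt0.
have /setP eS := hA _ _ (s1 _) (s1 _) e.
apply: perm_map; apply: uniq_perm; try exact: (@mask_uniq _ t0 ut0).
move=> x.
by have := eS x; rewrite !inE.
Qed.

Lemma dim_le : (dimZ Z <= n)%N.
Proof.
apply/bigmax_leqP => m _; rewrite size_mask ?size_tuple //.
by apply: leq_trans (count_size _ _) _; rewrite size_tuple.
Qed.

End Main.

Local Open Scope ring_scope.
Theorem corollary3p6 (G : zmodType) (Z : seq G) :
  (1 <= dimZ Z)%N ->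
  ((size (addspan Z))%:R : rat)
    <= ((4 * size Z)%:R / (dimZ Z)%:R) ^+ (2 * dimZ Z).
Proof.
move=> d1.
set d := dimZ Z.
have h1 : (size (addspan Z) <= \sum_(k < d.+1) 'C(size Z, k))%N.
  rewrite card_FF.
  apply: leq_trans (@pajor _ #|[set: 'I_(size Z)]| setT _ (leqnn _) _) _.
    by apply/subsetP => S _; rewrite powersetE subsetT.
  have := card_small 'I_(size Z) d; rewrite card_ord; apply: leq_trans.
  apply: subset_leq_card; apply/subsetP => A AS; rewrite inE.
  by apply: indep_dim; apply: sh_indep.
have h2 := sum_bound (dim_le Z).
rewrite expr_div_n ler_pdivlMr; last by rewrite exprn_gt0 // ltr0n.
rewrite -!natrX -natrM ler_nat.
exact: leq_trans (leq_mul h1 (leqnn _)) h2.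
Qed.
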